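(* Let $n\ge 5$ and let $f$ be an RDF of $P(n,2)$ of weight $\gamma_R(P(n,2))$ with $|V_2|$ minimum among all such minimum-weight RDFs. For any index $i$, if $r_f(V'(i,7)) \le 0.5$, then $v_{i+3}\notin V_2$.
   Context: For integers $n \ge 3$ and $1 \le k < n/2$, the generalized Petersen graph $P(n,k)$ has vertex set $\{v_i, u_i : 0 \le i \le n-1\}$ and edge set $\{v_iv_{i+1},\ v_iu_i,\ u_iu_{i+k} : 0 \le i \le n-1\}$, with subscripts taken modulo $n$. A Roman domination function (RDF) of a graph $G$ is a function $f: V(G)\to\{0,1,2\}$ such that every vertex $u$ with $f(u)=0$ is adjacent to at least one vertex $v$ with $f(v)=2$. Its weight is $\sum_{u\in V(G)} f(u)$; $\gamma_R(G)$ is the minimum weight of an RDF of $G$. For an RDF $f$ write $V_i=\{w: f(w)=i\}$, $i=0,1,2$. Define $g_f(w)=0.5$ if $w\in V_2$, $g_f(w)=1$ if $w\in V_1$, and $g_f(w)=0.5\,|N(w)\cap V_2|$ if $w\in V_0$, where $N(w)$ is the set of neighbors of $w$. Let $r_f(w)=g_f(w)-0.5$ and, for $S\subseteq V(P(n,2))$, $r_f(S)=\sum_{w\in S} r_f(w)$. For an integer $i$ and $t\ge 1$, $V'(i,t)=\{v_j,u_j : i\le j\le i+t-1\}$ (subscripts modulo $n$). *)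

(* Defs.v *)
From HB Require Import structures.
From mathcomp Require Import all_boot all_order all_algebra.
Set Implicit Arguments. Unset Strict Implicit. Unset Printing Implicit Defensive.
Import Order.TTheory GRing.Theory Num.Theory.

(* Vertices of P(n,2): (j, false) = v_j, (j, true) = u_j, with j : 'I_n. *)
Definition pvert (n : nat) := ('I_n * bool)%type.

(* Adjacency of the generalized Petersen graph P(n,k):
   v_j v_{j+1}, v_j u_j, u_j u_{j+k}, subscripts mod n. *)
Definition gp_adj (n k : nat) (x y : pvert n) : bool :=
  let: (i, b) := x in let: (j, c) := y in
  if b == c then
    let s := if b then k else 1%N in
    (val j == (val i + s) %% n) || (val i == (val j + s) %% n)
  else val i == val j.

Definition P2_adj (n : nat) : pvert n -> pvert n -> bool := @gp_adj n 2.

Definition isRDF (n : nat) (f : pvert n -> nat) : Prop :=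
  (forall w, f w <= 2)%N /\
  (forall w, f w = 0%N -> exists x, P2_adj w x && (f x == 2%N)).

Definition rweight (n : nat) (f : pvert n -> nat) : nat := (\sum_(w : pvert n) f w)%N.

Definition is_gammaR_fun (n : nat) (f : pvert n -> nat) : Prop :=
  isRDF f /\ forall g : pvert n -> nat, isRDF g -> (rweight f <= rweight g)%N.

Definition V2 (n : nat) (f : pvert n -> nat) : {set pvert n} :=
  [set w | f w == 2%N].

Local Open Scope ring_scope.

Definition g_f (n : nat) (f : pvert n -> nat) (w : pvert n) : rat :=
  if f w == 2%N then 1 / 2
  else if f w == 1%N then 1
  else (#|[set x | P2_adj w x && (f x == 2%N)]|)%:R / 2.

Definition r_f (n : nat) (f : pvert n -> nat) (w : pvert n) : rat := g_f f w - 1 / 2.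

Definition r_fS (n : nat) (f : pvert n -> nat) (S : {set pvert n}) : rat :=
  \sum_(w in S) r_f f w.

(* V'(i,t) = {v_j, u_j : i <= j <= i+t-1}, subscripts mod n *)
Definition Vp (n i t : nat) : {set pvert n} :=
  [set w : pvert n | [exists s : 'I_t, val w.1 == (i + s) %% n]%N].

Definition is_v (n j : nat) (w : pvert n) : bool := (val w.1 == j %% n)%N && ~~ w.2.

(* Main.v *)
Require Import Defs.
From HB Require Import structures.
From mathcomp Require Import all_boot all_order all_algebra zify lra.
From Stdlib Require FunctionalExtensionality.
Set Implicit Arguments. Unset Strict Implicit. Unset Printing Implicit Defensive.
Import Order.TTheory GRing.Theory Num.Theory.

Definition lv := (nat * bool)%type.
Definition md (x : lv) : bool :=
  if x.2 then (2 <= x.1 <= 10) else (3 <= x.1 <= 9).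
Definition slots (x : lv) : seq lv :=
  if x.2 then [:: (x.1 + 2, true); (x.1 - 2, true); (x.1, false)]
  else [:: (x.1 + 1, false); (x.1 - 1, false); (x.1, true)].
Definition ML : seq lv := [seq (p, false) | p <- iota 3 7] ++ [seq (p, true) | p <- iota 2 9].
Definition WL : seq lv := [seq (p, b) | p <- iota 4 5, b <- [:: false; true]].
Definition pp (sm : lv -> bool) (z x : lv) : bool :=
  ~~ md x || (~~ sm x && all (fun t => (t == z) || ~~ md t || ~~ sm t) (slots x)).
Definition indep (sm : lv -> bool) : bool :=
  all (fun z => all (fun t => ~~ (md t && sm z && sm t)) (slots z)) ML.
Definition privok (sm : lv -> bool) : bool :=
  all (fun z => sm z ==> (1 < count (pp sm z) (slots z))) ML.
Definition lb (sm : lv -> bool) (w : lv) : nat :=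
  if sm w then 0 else let k := count sm (slots w) in if k == 0 then 1 else k.-1.
Definition budget (sm : lv -> bool) : bool := sumn (map (lb sm) WL) <= 1.
Definition check (sm : lv -> bool) : bool :=
  if sm (6, false) then if budget sm then if indep sm then privok sm else false else false else false.
Definition code (x : lv) : nat := if x.2 then x.1 + 5 else x.1 - 3.
Definition smb (vec : seq bool) (x : lv) : bool := if md x then nth false vec (code x) else false.
Fixpoint allv (k : nat) : seq (seq bool) :=
  if k is k'.+1 then [seq b :: v | b <- [:: true; false], v <- allv k'] else [:: [::]].
Lemma allvP k v : size v = k -> v \in allv k.
Proof.
elim: k v => [|k IH] [|b v] //= [] /IH H.
rewrite mem_cat; case: b; [apply/orP; left | apply/orP; right; rewrite cats0]; exact: map_f.
Qed.
Lemma brute : all (fun v => ~~ check (smb v)) (allv 16).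
Proof. vm_compute. reflexivity. Qed.
Lemma check_false vec : size vec = 16 -> check (smb vec) = false.
Proof. by move=> /allvP H; apply/negbTE; move/allP: brute => /(_ _ H). Qed.

Definition VV (m j : nat) (b : bool) : pvert m.+1 := (inord (j %% m.+1), b).

Lemma VV_val m j b : val (VV m j b).1 = j %% m.+1.
Proof. by rewrite /VV /= inordK // ltn_pmod. Qed.

Lemma VV_eq m j1 j2 b1 b2 :
  (VV m j1 b1 == VV m j2 b2) = (j1 %% m.+1 == j2 %% m.+1) && (b1 == b2).
Proof.
rewrite /VV xpair_eqE /=; congr (_ && _).
apply/eqP/eqP => [H|->] //.
by rewrite -(VV_val m j1 b1) -(VV_val m j2 b1) /VV /= H.
Qed.

Lemma vertexV m (w : pvert m.+1) : w = VV m (val w.1) w.2.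
Proof.
case: w => x b; rewrite /VV /= modn_small //.
by congr (_, _); apply: val_inj; rewrite /= inordK.
Qed.

Lemma modS_eq N j y s : 0 < N -> y < N -> s <= N ->
  (j %% N == (y + s) %% N) = (y == (j + N - s) %% N).
Proof.
move=> N0 yN sN.
have E: (y == (j + N - s) %% N) = (y + s == j + N - s + s %[mod N]).
  by rewrite eqn_modDr (modn_small yN).
rewrite E subnK; last by lia.
by rewrite modnDr eq_sym.
Qed.

Definition nbrs m (j : nat) (b : bool) : seq (pvert m.+1) :=
  if b then [:: VV m (j + 2) true; VV m (j + m.+1 - 2) true; VV m j false]
  else [:: VV m (j + 1) false; VV m (j + m.+1 - 1) false; VV m j true].

Lemma adjE m j b y : 1 < m -> P2_adj (VV m j b) y = (y \in nbrs m j b).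
Proof.
move=> m1; case: y => y c.
have yN := ltn_ord y.
have hv : ((inord (j %% m.+1) : 'I_m.+1) : nat) = j %% m.+1 by rewrite inordK // ltn_pmod.
rewrite /P2_adj; case: b; rewrite /nbrs 2!in_cons mem_seq1;
rewrite [(y, c)]vertexV !VV_eq /= (modn_small yN);
rewrite /gp_adj /VV /= hv ?inord_val;
case: c => /=; rewrite ?andbT ?andbF ?orbF ?modnDml //;
rewrite modS_eq //; lia.
Qed.

Lemma neq_modD N a d : 0 < d < N -> (a %% N == (a + d) %% N) = false.
Proof.
move=> /andP [d0 dN]; rewrite -{1}(addn0 a) eqn_modDl mod0n modn_small //.
by rewrite eq_sym; apply/negbTE; rewrite -lt0n.
Qed.

Lemma VV_width m a d b c : 4 <= m -> d < 5 -> VV m a b = VV m (a + d) c -> d = 0 /\ b = c.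
Proof.
move=> m4 d5 /eqP; rewrite VV_eq => /andP [H /eqP ->]; split => //.
case: d d5 H => [//|d] d5; rewrite neq_modD //; lia.
Qed.

Lemma adj_sym m (w x : pvert m.+1) : P2_adj w x = P2_adj x w.
Proof.
case: w x => [i b] [j c]; rewrite /P2_adj /gp_adj (eq_sym c).
by case: eqP => [->|_]; [rewrite orbC | rewrite eq_sym].
Qed.

Lemma adj_irr m (w : pvert m.+1) : 4 <= m -> P2_adj w w = false.
Proof.
move=> m4; case: w => i b; rewrite /P2_adj /gp_adj eqxx orbb.
have iN : \val i < m.+1 by exact: ltn_ord.
by rewrite -{1}(modn_small iN) neq_modD //; case: b; lia.
Qed.

Definition upd m (f : pvert m.+1 -> nat) (z : pvert m.+1) (v : nat) : pvert m.+1 -> nat :=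
  fun w => if w == z then v else f w.

Lemma rweight_upd m (f : pvert m.+1 -> nat) z v : (rweight (upd f z v) + f z = rweight f + v)%N.
Proof.
rewrite /rweight (bigD1 z) //= [in RHS](bigD1 z) //= /upd eqxx.
rewrite (eq_bigr f) => [|w /negbTE ->] //.
by rewrite -addnA addnC; congr (_ + _); rewrite addnC.
Qed.

Lemma V2_upd m (f : pvert m.+1 -> nat) z v : (#|V2 (upd f z v)| + (f z == 2) = #|V2 f| + (v == 2))%N.
Proof.
rewrite /V2 (cardD1 z) [in RHS](cardD1 z) !inE /upd eqxx.
have -> : #|[predD1 [set w | (if w == z then v else f w) == 2] & z]| =
          #|[predD1 [set w | f w == 2] & z]|.
  apply: eq_card => w; case: (eqVneq w z) => [->|wz]; first by rewrite !inE eqxx.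
  by rewrite !inE wz (negbTE wz).
by rewrite -addnA addnC; congr (_ + _); rewrite addnC.
Qed.

Lemma E1 m (f : pvert m.+1 -> nat) w x :
  is_gammaR_fun f -> f w = 1%N -> P2_adj w x -> f x = 2%N -> False.
Proof.
move=> [[f2 fdom] fmin] fw1 wx fx2.
have gR : isRDF (upd f w 0).
  split=> t; rewrite /upd; first by case: eqP.
  case: eqP => [-> _ | tw ft].
  - exists x; rewrite wx /=.
    have xw : x != w by apply/eqP => E; move: fx2; rewrite E fw1.
    by rewrite (negbTE xw) fx2.
  - have [y /andP [ty /eqP fy]] := fdom t ft.
    have yw : y != w by apply/eqP => E; move: fy; rewrite E fw1.
    by exists y; rewrite ty /= (negbTE yw) fy.
have := fmin _ gR; have := rweight_upd f w 0; rewrite fw1; lia.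
Qed.

Definition priv m (f : pvert m.+1 -> nat) (z x : pvert m.+1) : bool :=
  [&& P2_adj z x, f x == 0%N & [forall t, (P2_adj x t && (f t == 2%N)) ==> (t == z)]].

Lemma nonpriv_dom m (f : pvert m.+1 -> nat) z t :
  isRDF f -> f t = 0%N -> ~~ priv f z t -> exists y, [&& P2_adj t y, f y == 2%N & y != z].
Proof.
move=> [_ fdom] ft np.
have [y /andP [ty fy]] := fdom t ft.
case: (eqVneq y z) => [yz | yz]; last by exists y; rewrite ty fy yz.
move: np; rewrite -yz /priv adj_sym ty ft eqxx /= negb_forall => /existsP [t' H].
by exists t'; move: H; rewrite negb_imply -andbA.
Qed.

Lemma gamma_eq m (f g : pvert m.+1 -> nat) :
  is_gammaR_fun f -> isRDF g -> rweight g = rweight f -> is_gammaR_fun g.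
Proof. by move=> [_ fmin] gR E; split => // h hR; rewrite E; apply: fmin. Qed.

Lemma E2 m (f : pvert m.+1 -> nat) z :
  is_gammaR_fun f -> (forall g : pvert m.+1 -> nat, is_gammaR_fun g -> (#|V2 f| <= #|V2 g|)%N) ->
  f z = 2%N -> exists x1 x2, [/\ x1 != x2, priv f z x1 & priv f z x2].
Proof.
move=> fg fV fz.
have [[f2 fdom] fmin] := fg.
set P := [set x | priv f z x].
case: (ltnP 1 #|P|) => [/card_gt1P [x1 [x2 [H1 H2 ne]]] | /card_le1_eqP le1].
  by exists x1, x2; rewrite !inE in H1 H2.
exfalso.
case: (set_0Vmem P) => [P0 | [x xP]].
- have gR : isRDF (upd f z 1).
    split=> t; rewrite /upd; first by case: eqP => // _; apply: f2.
    case: eqP => // /eqP tz ft.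
    have np : ~~ priv f z t.
      apply/negP => pt; have tP : t \in P by rewrite inE.
      by rewrite P0 inE in tP.
    have [y /and3P [ty /eqP fy yz]] := nonpriv_dom (conj f2 fdom) ft np.
    by exists y; rewrite ty /= (negbTE yz) fy.
  have := fmin _ gR; have := rweight_upd f z 1; rewrite fz; lia.
- have px : priv f z x by rewrite inE in xP.
  have fx0 : f x = 0%N by case/and3P: px => _ /eqP.
  have xz : x != z by apply/eqP => E; move: fx0; rewrite E fz.
  set g := upd (upd f z 1) x 1.
  have gR : isRDF g.
    split=> t; rewrite /g /upd; first by do 2 (case: eqP => // _); apply: f2.
    case: eqP => // /eqP tx; case: eqP => // /eqP tz ft.
    have np : ~~ priv f z t.
      apply/negP => pt; have tP : t \in P by rewrite inE.
      by move/eqP: tx; apply; apply: le1.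
    have [y /and3P [ty /eqP fy yz]] := nonpriv_dom (conj f2 fdom) ft np.
    have yx : y != x by apply/eqP => E; move: fy; rewrite E fx0.
    by exists y; rewrite ty /= (negbTE yx) (negbTE yz) fy.
  have w1 := rweight_upd (upd f z 1) x 1.
  have w2 := rweight_upd f z 1.
  have c1 := V2_upd (upd f z 1) x 1.
  have c2 := V2_upd f z 1.
  have ux : upd f z 1 x = 0%N by rewrite /upd (negbTE xz).
  rewrite ux fz /= in w1 w2 c1 c2.
  set A := rweight (upd f z 1) in w1 w2.
  set B := rweight (upd (upd f z 1) x 1) in w1.
  set C := #|V2 (upd f z 1)| in c1 c2.
  set D := #|V2 (upd (upd f z 1) x 1)| in c1.
  have gg : is_gammaR_fun g by apply: gamma_eq fg gR _; rewrite /g -/B; lia.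
  have := fV _ gg; rewrite /g -/D.
  set E := #|V2 f| in c2 *. lia.
Qed.

Lemma nbr_pigeon m z (a b c d : pvert m.+1) : 1 < m -> uniq [:: a; b; c; d] ->
  P2_adj z a -> P2_adj z b -> P2_adj z c -> P2_adj z d -> False.
Proof.
move=> m1 U; rewrite [z]vertexV !adjE // => Ha Hb Hc Hd.
have : size [:: a; b; c; d] <= size (nbrs m (val z.1) z.2).
  by apply: uniq_leq_size U _ => t; rewrite !inE => /or4P [] /eqP ->.
by rewrite /nbrs; case: (z.2).
Qed.

Lemma E3_rdf m (f : pvert m.+1 -> nat) z w x1 x2 : 4 <= m -> isRDF f ->
  f z = 2%N -> f w = 2%N -> P2_adj z w -> x1 != x2 -> priv f z x1 -> priv f z x2 ->
  isRDF (upd (upd (upd f z 0) x1 1) x2 1).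
Proof.
move=> m4 [f2 fdom] fz fw zw ne p1 p2.
have [a1 f1 _] := and3P p1; have [a2 f2' _] := and3P p2.
move/eqP: f1 => f1; move/eqP: f2' => f2'.
have x1z : x1 != z by apply/eqP => E; move: f1; rewrite E fz.
have x2z : x2 != z by apply/eqP => E; move: f2'; rewrite E fz.
have wz : w != z by apply/eqP => E; move: zw; rewrite E adj_irr.
have wx1 : w != x1 by apply/eqP => E; move: fw; rewrite E f1.
have wx2 : w != x2 by apply/eqP => E; move: fw; rewrite E f2'.
rewrite /upd; split=> t.
  by case: (t == x2); case: (t == x1); case: (t == z); rewrite ?f2.
case: (eqVneq t x2) => // tx2; case: (eqVneq t x1) => // tx1; case: (eqVneq t z) => [-> _ | tz ft].
  by exists w; rewrite zw (negbTE wx2) (negbTE wx1) (negbTE wz) fw.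
case: (boolP (priv f z t)) => [pt | np].
  exfalso; have [azt _ _] := and3P pt.
  have U : uniq [:: t; x1; x2; w].
    rewrite /= !inE !negb_or tx1 tx2 ne (eq_sym x1) (eq_sym x2) wx1 wx2 /= !andbT.
    by apply/eqP => E; move: fw; rewrite -E ft.
  have m1 : 1 < m by apply: leq_trans m4.
  exact: (nbr_pigeon m1 U azt a1 a2 zw).
have [y /and3P [ty /eqP fy yz]] := nonpriv_dom (conj f2 fdom) ft np.
have yx1 : y != x1 by apply/eqP => E; move: fy; rewrite E f1.
have yx2 : y != x2 by apply/eqP => E; move: fy; rewrite E f2'.
by exists y; rewrite ty (negbTE yx2) (negbTE yx1) (negbTE yz) fy.
Qed.

Lemma E3 m (f : pvert m.+1 -> nat) z w : 4 <= m ->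
  is_gammaR_fun f -> (forall g : pvert m.+1 -> nat, is_gammaR_fun g -> (#|V2 f| <= #|V2 g|)%N) ->
  f z = 2%N -> f w = 2%N -> P2_adj z w -> False.
Proof.
move=> m4 fg fV fz fw zw.
have [[f2 fdom] fmin] := fg.
have [x1 [x2 [ne p1 p2]]] := E2 fg fV fz.
have [a1 f1 _] := and3P p1; have [a2 f2' _] := and3P p2.
move/eqP: f1 => f1; move/eqP: f2' => f2'.
have x1z : x1 != z by apply/eqP => E; move: f1; rewrite E fz.
have x2z : x2 != z by apply/eqP => E; move: f2'; rewrite E fz.
have wz : w != z by apply/eqP => E; move: zw; rewrite E adj_irr.
have wx1 : w != x1 by apply/eqP => E; move: fw; rewrite E f1.
have wx2 : w != x2 by apply/eqP => E; move: fw; rewrite E f2'.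
set g := upd (upd (upd f z 0) x1 1) x2 1.
have gE t : g t = if t == x2 then 1%N else if t == x1 then 1%N else if t == z then 0%N else f t by [].
have gR : isRDF g by apply: E3_rdf m4 (conj f2 fdom) fz fw zw ne p1 p2.
have w1 := rweight_upd (upd (upd f z 0) x1 1) x2 1.
have w2 := rweight_upd (upd f z 0) x1 1.
have w3 := rweight_upd f z 0.
have c1 := V2_upd (upd (upd f z 0) x1 1) x2 1.
have c2 := V2_upd (upd f z 0) x1 1.
have c3 := V2_upd f z 0.
have u1 : upd (upd f z 0) x1 1 x2 = 0%N.
  by rewrite /upd eq_sym (negbTE ne) (negbTE x2z).
have u2 : upd f z 0 x1 = 0%N by rewrite /upd (negbTE x1z).
rewrite u1 u2 fz /= in w1 w2 w3 c1 c2 c3.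
set A := rweight (upd f z 0) in w2 w3.
set B := rweight (upd (upd f z 0) x1 1) in w1 w2.
set B' := rweight (upd (upd (upd f z 0) x1 1) x2 1) in w1.
set C := #|V2 (upd f z 0)| in c2 c3.
set D := #|V2 (upd (upd f z 0) x1 1)| in c1 c2.
set D' := #|V2 (upd (upd (upd f z 0) x1 1) x2 1)| in c1.
set E := rweight f in w3.
have gg : is_gammaR_fun g by apply: gamma_eq fg gR _; rewrite /g -/B' -/E; lia.
have := fV _ gg; rewrite /g -/D'.
set F := #|V2 f| in c3 *. lia.
Qed.

Definition idx m i p := i + 2 * m.+1 + p - 3.
Definition RR m i (x : lv) : pvert m.+1 := VV m (idx m i x.1) x.2.

Lemma Rslots m i x : 1 < m -> 2 <= x.1 -> map (RR m i) (slots x) = nbrs m (idx m i x.1) x.2.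
Proof.
move=> m1; case: x => p b /= p2; rewrite /slots /nbrs /RR /=; case: b => /=.
- congr [:: _; _; _]; first by congr VV; rewrite /idx; lia.
  apply/eqP; rewrite VV_eq eqxx andbT.
  have -> : idx m i p + m.+1 - 2 = 1 * m.+1 + idx m i (p - 2) by rewrite /idx; lia.
  by rewrite modnMDl.
- congr [:: _; _; _]; first by congr VV; rewrite /idx; lia.
  apply/eqP; rewrite VV_eq eqxx andbT.
  have -> : idx m i p + m.+1 - 1 = 1 * m.+1 + idx m i (p - 1) by rewrite /idx; lia.
  by rewrite modnMDl.
Qed.

Lemma adjR m i x y : 1 < m -> 2 <= x.1 -> P2_adj (RR m i x) y = (y \in map (RR m i) (slots x)).
Proof. by move=> m1 p2; rewrite Rslots // /RR adjE. Qed.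

Lemma slots_pos x s : 2 <= x.1 -> s \in slots x -> s.1 <= x.1 + 2 /\ x.1 <= s.1 + 2.
Proof.
case: x => p b /= p2; rewrite /slots /=; case: b; rewrite !inE => /or3P [] /eqP -> /=; lia.
Qed.

Lemma RR_inj m i x y : 4 <= m -> RR m i x = RR m i y -> x.1 <= y.1 + 4 -> y.1 <= x.1 + 4 -> x = y.
Proof.
move=> m4; case: x y => p b [q c] /=.
wlog pq : p q b c / p <= q.
  move=> W E h1 h2; case: (leqP p q) => H; first exact: W.
  by symmetry; apply: W => //; lia.
rewrite /RR /= => E h1 h2.
have e : idx m i q = idx m i p + (q - p) by clear E; rewrite /idx; lia.
rewrite e in E.
have q5 : q - p < 5 by clear E; lia.
have [d0 ->] := VV_width m4 q5 E.
by congr pair; clear E; lia.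
Qed.

Definition smr m i (f : pvert m.+1 -> nat) (x : lv) : bool := md x && (f (RR m i x) == 2%N).
Arguments smr : clear implicits.

Lemma md2 x : md x -> 2 <= x.1.
Proof. by case: x => p [] /andP [] /=; lia. Qed.

Lemma indep_sound m i (f : pvert m.+1 -> nat) : 4 <= m -> is_gammaR_fun f ->
  (forall g : pvert m.+1 -> nat, is_gammaR_fun g -> (#|V2 f| <= #|V2 g|)%N) -> indep (smr m i f).
Proof.
move=> m4 fg fV; apply/allP => z _; apply/allP => t tz.
apply/negP => /andP [/andP [mdt /andP [mdz /eqP fz]] /andP [_ /eqP ft]].
have m1 : 1 < m by apply: leq_trans m4.
by apply: (E3 m4 fg fV fz ft); rewrite adjR ?map_f // md2.
Qed.

Lemma count2 (T : eqType) (P : pred T) l a b :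
  a \in l -> b \in l -> a != b -> P a -> P b -> 1 < count P l.
Proof.
move=> al bl ab Pa Pb; rewrite -size_filter.
have U : uniq [:: a; b] by rewrite /= inE ab.
apply: (uniq_leq_size U) => t; rewrite !inE mem_filter => /orP [] /eqP ->.
- by rewrite Pa.
- by rewrite Pb.
Qed.

Lemma le4 a b c : a <= b + 2 -> b <= c + 2 -> a <= c + 4.
Proof. lia. Qed.

Lemma pp_sound m i (f : pvert m.+1 -> nat) z s : 4 <= m -> 2 <= z.1 -> s \in slots z ->
  priv f (RR m i z) (RR m i s) -> pp (smr m i f) z s.
Proof.
move=> m4 z2 sz /and3P [_ /eqP fs0 /forallP H].
have m1 : 1 < m by apply: leq_trans m4.
rewrite /pp; case: (boolP (md s)) => //= mds.
rewrite /smr mds fs0 /=; apply/allP => t ts.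
case: (eqVneq t z) => //= tz.
case: (boolP (md t)) => //= mdt; apply/negP => /eqP ft.
have s2 := md2 mds.
have := H (RR m i t); rewrite adjR // map_f //= ft eqxx /= => /eqP E.
have [h1 h2] := slots_pos z2 sz; have [h3 h4] := slots_pos s2 ts.
move: tz; rewrite (RR_inj m4 E) ?eqxx //; [exact: le4 h3 h1 | exact: le4 h2 h4].
Qed.

Lemma privok_sound m i (f : pvert m.+1 -> nat) : 4 <= m -> is_gammaR_fun f ->
  (forall g : pvert m.+1 -> nat, is_gammaR_fun g -> (#|V2 f| <= #|V2 g|)%N) -> privok (smr m i f).
Proof.
move=> m4 fg fV; apply/allP => z _; apply/implyP => /andP [mdz /eqP fz].
have m1 : 1 < m by apply: leq_trans m4.
have z2 := md2 mdz.
have [x1 [x2 [ne p1 p2]]] := E2 fg fV fz.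
have := p1; case/and3P; rewrite adjR // => /mapP [s1 s1z E1] _ _.
have := p2; case/and3P; rewrite adjR // => /mapP [s2 s2z E2'] _ _.
subst x1 x2.
apply: (count2 s1z s2z).
- by apply/eqP => E; move: ne; rewrite E eqxx.
- exact: pp_sound.
- exact: pp_sound.
Qed.

Lemma r_ge0 m (f : pvert m.+1 -> nat) w : isRDF f -> (0 <= r_f f w)%R.
Proof.
move=> [f2 fdom]; rewrite /r_f /g_f.
case: eqP => [_|f2']; first by rewrite subrr.
case: eqP => [_|f1]; first by lra.
have f0 : f w = 0%N by have := f2 w; move: f2' f1; clear; lia.
have [x /andP [wx fx]] := fdom w f0.
set K := #|_|.
have : (0 < K)%N by apply/card_gt0P; exists x; rewrite inE wx fx.
rewrite -(ler_nat rat) => H; lra.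
Qed.

Lemma WL_facts : all (fun x => [&& md x, all md (slots x), uniq (slots x) & 4 <= x.1 <= 8]) WL.
Proof. by []. Qed.

Lemma k_le_K m i (f : pvert m.+1 -> nat) x : 4 <= m -> x \in WL ->
  (count (smr m i f) (slots x) <= #|[set y | P2_adj (RR m i x) y && (f y == 2%N)]|)%N.
Proof.
move=> m4 xW; have m1 : 1 < m by apply: leq_trans m4.
have /and4P [mdx mds us /andP [x4 x8]] := allP WL_facts x xW.
have x2 : 2 <= x.1 by apply: leq_trans x4.
rewrite (@eq_in_count _ _ (fun s => f (RR m i s) == 2%N)); last first.
  by move=> s sx; rewrite /smr (allP mds s sx).
rewrite -(count_map (RR m i) (fun y => f y == 2%N)) -size_filter cardE.
apply: uniq_leq_size.
  apply: filter_uniq; rewrite map_inj_in_uniq // => a b aS bS E.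
  have [h1 h2] := slots_pos x2 aS; have [h3 h4] := slots_pos x2 bS.
  by apply: (RR_inj m4 E); [exact: le4 h1 h4 | exact: le4 h3 h2].
move=> y; rewrite mem_filter mem_enum inE => /andP [fy yS].
by rewrite adjR // yS.
Qed.

Lemma lb_sound m i (f : pvert m.+1 -> nat) x : 4 <= m -> is_gammaR_fun f -> x \in WL ->
  ((lb (smr m i f) x)%:R <= 2 * r_f f (RR m i x))%R.
Proof.
move=> m4 fg xW; have [[f2 fdom] fmin] := fg.
have m1 : 1 < m by apply: leq_trans m4.
have /and4P [mdx mds us /andP [x4 x8]] := allP WL_facts x xW.
have x2 : 2 <= x.1 by apply: leq_trans x4.
have kK := k_le_K i f m4 xW.
have r0 := r_ge0 (RR m i x) (conj f2 fdom).
rewrite /lb {1}/smr mdx /=.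
case: eqP => [_ | fx2]; first by rewrite mulr_ge0.
move: kK; set k := count _ _; set K := #|_| => kK.
have f01 : f (RR m i x) = 0%N \/ f (RR m i x) = 1%N.
  by have := f2 (RR m i x); move: fx2; clear; lia.
case: f01 => fx.
- have k1 : (0 < k)%N.
    have [y /andP [xy fy]] := fdom _ fx.
    move: xy; rewrite adjR // => /mapP [s sS ys].
    rewrite /k -has_count; apply/hasP; exists s => //.
    by rewrite /smr (allP mds s sS) -ys.
  move: kK k1; rewrite /r_f /g_f fx /= -/K.
  case: k => [//|k] kK _ /=.
  have : (k.+1%:R <= K%:R :> rat)%R by rewrite ler_nat.
  rewrite -addn1 natrD; lra.
- have k0 : k = 0%N.
    apply/eqP; rewrite -leqn0 leqNgt -has_count; apply/hasP => [[s sS]].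
    rewrite /smr => /andP [_ /eqP fs].
    by apply: (E1 fg fx _ fs); rewrite adjR // map_f.
  by rewrite k0 /r_f /g_f fx /=; lra.
Qed.

Lemma le_range a b : 4 <= a <= 8 -> 4 <= b <= 8 -> a <= b + 4.
Proof. move=> /andP [? ?] /andP [? ?]; lia. Qed.

Lemma RR_Vp m i x : 4 <= m -> x \in WL -> RR m i x \in Vp m.+1 i 7.
Proof.
move=> m4; case: x => p b xW; have /and4P [_ _ _ /andP [x4 x8]] := allP WL_facts _ xW.
rewrite /= in x4 x8; rewrite inE; apply/existsP.
have h : p - 3 < 7 by move: x8; clear; lia.
exists (Ordinal h); rewrite /RR VV_val /=.
have -> : idx m i p = 2 * m.+1 + (i + (p - 3)) by rewrite /idx; move: x4; clear; lia.
by rewrite modnMDl.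
Qed.

Lemma sum_window m i (f : pvert m.+1 -> nat) : 4 <= m -> isRDF f ->
  (\sum_(x <- WL) r_f f (RR m i x) <= r_fS f (Vp m.+1 i 7))%R.
Proof.
move=> m4 fR.
have U : uniq (map (RR m i) WL).
  rewrite map_inj_in_uniq // => a b aW bW E.
  have /and4P [_ _ _ ha] := allP WL_facts a aW.
  have /and4P [_ _ _ hb] := allP WL_facts b bW.
  by apply: (RR_inj m4 E); apply: le_range.
rewrite -(big_map (RR m i) xpredT (r_f f)) big_uniq //= /r_fS.
rewrite [X in (_ <= X)%R](bigID (mem (map (RR m i) WL))) /=.
set L := map (RR m i) WL.
have -> : (\sum_(w in Vp m.+1 i 7 | w \in L) r_f f w = \sum_(w in L) r_f f w)%R.
  apply: eq_bigl => w; case wL: (w \in L); rewrite ?andbT ?andbF //.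
  by move: wL => /mapP [x xW ->]; apply: RR_Vp.
by rewrite lerDl sumr_ge0 // => w _; apply: r_ge0.
Qed.

Lemma budget_sound m i (f : pvert m.+1 -> nat) : 4 <= m -> is_gammaR_fun f ->
  (r_fS f (Vp m.+1 i 7) <= 1 / 2)%R -> budget (smr m i f).
Proof.
move=> m4 fg H; have [fR _] := fg.
rewrite /budget -(ler_nat rat) sumnE big_map natr_sum.
apply: (@le_trans _ _ (\sum_(x <- WL) 2 * r_f f (RR m i x))%R).
  by rewrite !big_seq; apply: ler_sum => x xW; apply: lb_sound.
rewrite -mulr_sumr; have := sum_window i m4 fR; lra.
Qed.

Definition decode (k : nat) : lv := if k < 7 then (k + 3, false) else (k - 5, true).

Lemma decode_code x : md x -> decode (code x) = x /\ code x < 16.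
Proof.
case: x => p [] /andP [h1 h2]; rewrite /= in h1 h2; rewrite /decode /code /=.
- have -> : (p + 5 < 7) = false by apply/negbTE; rewrite -leqNgt; lia.
  have -> : p + 5 - 5 = p by lia.
  by split => //; lia.
- have -> : (p - 3 < 7) = true by apply/idP; lia.
  have -> : p - 3 + 3 = p by lia.
  by split => //; lia.
Qed.

Lemma sm_vec m i (f : pvert m.+1 -> nat) :
  smr m i f = smb [seq smr m i f (decode k) | k <- iota 0 16].
Proof.
apply: FunctionalExtensionality.functional_extensionality => x.
rewrite /smb; case: (boolP (md x)) => mdx; last by rewrite /smr (negbTE mdx).
have [dc c16] := decode_code mdx.
by rewrite (nth_map 0) ?size_iota // nth_iota // add0n dc.
Qed.

Theorem lemma2p5 (n : nat) (f : pvert n -> nat) :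
  (5 <= n)%N ->
  is_gammaR_fun f ->
  (forall g : pvert n -> nat, is_gammaR_fun g -> (#|V2 f| <= #|V2 g|)%N) ->
  forall i : nat,
    (r_fS f (@Vp n i 7) <= 1 / 2)%R ->
    forall w : pvert n, @is_v n (i + 3) w -> w \notin V2 f.
Proof.
case: n f => [//|m] f m4 fg fV i Hr w wv; apply/negP => wV2.
have hw : RR m i (6, false) = w.
  move: wv; rewrite /is_v => /andP [/eqP wv w2].
  rewrite [w]vertexV /RR; apply/eqP; rewrite VV_eq /= (negbTE w2) wv modn_mod andbT.
  have -> : idx m i 6 = 2 * m.+1 + (i + 3) by rewrite /idx; clear; lia.
  by rewrite modnMDl.
have hv : smr m i f (6, false) by rewrite /smr hw; rewrite inE in wV2.
have c : check (smr m i f).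
  by rewrite /check hv budget_sound // indep_sound // privok_sound.
move: c; rewrite sm_vec check_false //.
Qed.
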